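(* Let $G$ be a simple directed graph and $\sigma$ a set of nodes with a simply-added split $\sigma=\tau\,\dot\cup\,\omega$ ($\omega$ simply-added onto $\tau$), where $\tau$ has uniform in-degree. If $\tau$ is not a stable motif, then $\sigma$ is not a stable motif (for a CTLN $W(G,\varepsilon,\delta)$ with legal parameters).
   Context: $\sigma=\tau\,\dot\cup\,\omega$ with $\tau,\omega$ nonempty and disjoint is a simply-added split ($\omega$ simply-added onto $\tau$) if for each $i\in\omega$, either $i\to j$ for every $j\in\tau$ or $i\to j$ for no $j\in\tau$ (no constraints on other edges). $\tau$ has uniform in-degree if all nodes of $G|_\tau$ have the same in-degree. Legal parameters: $\delta>0$, $0<\varepsilon<\frac{\delta}{\delta+1}$. $W$ has $W_{ii}=0$, $W_{ij}=-1+\varepsilon$ if $j\to i$, $W_{ij}=-1-\delta$ if $i\ne j$, $j\not\to i$; dynamics $\dot x_i=-x_i+[\sum_jW_{ij}x_j+\theta]_+$, $\theta>0$; nondegenerate. $W_\rho$ is the principal submatrix on $\rho$. $\rho$ is a stable motif if $\theta(I-W_\rho)^{-1}1_\rho$ has all entries positive and all eigenvalues of $I-W_\rho$ have positive real part. *)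

(* Defs.v *)
From HB Require Import structures.
From mathcomp Require Import all_boot all_order all_algebra.
From mathcomp Require Import reals complex.
Set Implicit Arguments. Unset Strict Implicit. Unset Printing Implicit Defensive.
Import Order.TTheory GRing.Theory Num.Theory.
Local Open Scope ring_scope.

(* A directed graph on nodes 'I_n: G j i means the edge j -> i. *)
Definition simple_digraph (n : nat) (G : rel 'I_n) : Prop :=
  forall i, ~~ G i i.

Definition simply_added_split (n : nat) (G : rel 'I_n)
    (sigma tau omega : {set 'I_n}) : Prop :=
  [/\ sigma = tau :|: omega, [disjoint tau & omega], tau != set0, omega != set0 &
      forall i, i \in omega ->
        (forall j, j \in tau -> G i j) \/ (forall j, j \in tau -> ~~ G i j)].

Definition indeg_in (n : nat) (G : rel 'I_n) (tau : {set 'I_n}) (i : 'I_n) : nat :=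
  #|[set j in tau | G j i]|.

Definition uniform_indegree (n : nat) (G : rel 'I_n) (tau : {set 'I_n}) : Prop :=
  exists d : nat, forall i, i \in tau -> indeg_in G tau i = d.

Definition legal_params (R : realType) (eps delta : R) : Prop :=
  0 < delta /\ 0 < eps /\ eps < delta / (delta + 1).

Definition ctln_W (R : realType) (n : nat) (G : rel 'I_n) (eps delta : R) : 'M[R]_n :=
  \matrix_(i, j) (if i == j then 0
                  else if G j i then -1 + eps else -1 - delta).

Definition principal_sub (R : realType) (n : nat) (W : 'M[R]_n) (rho : {set 'I_n})
  : 'M[R]_#|rho| :=
  \matrix_(a, b) W (enum_val a) (enum_val b).

Definition IminusW (R : realType) (n : nat) (W : 'M[R]_n) (rho : {set 'I_n})
  : 'M[R]_#|rho| := 1%:M - principal_sub W rho.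

Definition ctln_nondegenerate (R : realType) (n : nat) (W : 'M[R]_n) (theta : R) : Prop :=
  forall sigma : {set 'I_n},
    \det (IminusW W sigma) != 0 /\
    forall k : 'I_#|sigma|,
      \det (\matrix_(a, b) (if b == k then theta else IminusW W sigma a b)) != 0.


Definition stable_motif (R : realType) (n : nat) (W : 'M[R]_n) (theta : R)
    (rho : {set 'I_n}) : Prop :=
  (forall a : 'I_#|rho|,
      0 < (theta *: (invmx (IminusW W rho) *m (const_mx 1 : 'cV[R]_#|rho|))) a (ord0 : 'I_1)) /\
  (forall lam : R[i],
      eigenvalue (map_mx (fun x : R => Complex x 0) (IminusW W rho)) lam ->
      0 < complex.Re lam).

(* Main.v *)
Require Import Defs.
From HB Require Import structures.
From mathcomp Require Import all_boot all_order all_algebra.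
From mathcomp Require Import reals complex.
From mathcomp Require Import ring lra.
Set Implicit Arguments. Unset Strict Implicit. Unset Printing Implicit Defensive.
Import Order.TTheory GRing.Theory Num.Theory.
Local Open Scope ring_scope.

Section S.
Variables (R : realType) (n : nat) (G : rel 'I_n) (eps delta : R).
Hypothesis simpleG : simple_digraph G.

Definition mf (x y : 'I_n) : R :=
  if x == y then 1 else if G y x then 1 - eps else 1 + delta.

Lemma IW_E (rho : {set 'I_n}) a b :
  IminusW (ctln_W G eps delta) rho a b = mf (enum_val a) (enum_val b).
Proof.
rewrite /IminusW /principal_sub !mxE /mf (inj_eq enum_val_inj).
by case: (a == b) => /=; [|case: (G _ _) => /=]; ring.
Qed.

Lemma rowsum (tau : {set 'I_n}) i : i \in tau ->
  \sum_(x in tau) mf i x =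
  #|tau|%:R * (1 + delta) - delta - (eps + delta) * (indeg_in G tau i)%:R.
Proof.
move=> itau.
have E : forall x, x \in tau -> mf i x =
   (1 + delta) - delta * (x == i)%:R - (eps + delta) * (G x i)%:R.
  move=> x _; rewrite /mf eq_sym; case: eqP => [->|_].
    by rewrite (negbTE (simpleG i)) /=; ring.
  by case: (G x i) => /=; ring.
rewrite (eq_bigr _ E) !sumrB sumr_const -!mulr_sumr.
have -> : \sum_(x in tau) ((x == i)%:R : R) = 1.
  rewrite (bigD1 i) //= eqxx big1 ?addr0 // => x /andP [_ /negbTE ->] //.
have -> : \sum_(x in tau) ((G x i)%:R : R) = \sum_(x in [set j in tau | G j i]) 1.
  rewrite big_mkcond [RHS]big_mkcond; apply: eq_bigr => x _; rewrite inE.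
  by case: (x \in tau); case: (G x i).
rewrite sumr_const /indeg_in -mulr_natr -[_ *+ _]mulr_natr; ring.
Qed.


End S.
Unset Implicit Arguments.

Theorem corollary1 (R : realType) (n : nat) (G : rel 'I_n)
    (eps delta theta : R) (sigma tau omega : {set 'I_n}) :
  simple_digraph G ->
  legal_params eps delta ->
  0 < theta ->
  ctln_nondegenerate (ctln_W G eps delta) theta ->
  simply_added_split G sigma tau omega ->
  uniform_indegree G tau ->
  ~ stable_motif (ctln_W G eps delta) theta tau ->
  ~ stable_motif (ctln_W G eps delta) theta sigma.
Proof.
move=> sG [dpos [epos eplt]] thpos ndg [sig_eq dis tau0 om0 sa] [d unif] nst [Psig Qsig].
apply: nst.
have eps1 : eps < 1.
  apply: (lt_trans eplt); rewrite ltr_pdivrMr ?mul1r; lra.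
set r : R := #|tau|%:R * (1 + delta) - delta - (eps + delta) * d%:R.
have rowE : forall i, i \in tau -> \sum_(x in tau) mf G eps delta i x = r.
  by move=> i it; rewrite rowsum // unif.
have [i0 i0t] : exists i0, i0 \in tau by apply/set0Pn.
have rpos : 0 < r.
  rewrite -(rowE i0 i0t) (bigD1 i0) //= {1}/mf eqxx.
  apply: (lt_le_trans ltr01); rewrite lerDl; apply: sumr_ge0 => x _.
  by rewrite /mf; case: eqP => _; [|case: (G _ _)]; lra.
have M1 : IminusW (ctln_W G eps delta) tau *m (const_mx 1 : 'cV[R]_#|tau|) = const_mx r.
  apply/matrixP => a b; rewrite mxE [RHS]mxE.
  under eq_bigr do rewrite IW_E mxE mulr1.
  rewrite -(big_enum_val (fun x => mf G eps delta (enum_val a) x)).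
  by rewrite rowE ?enum_valP.
split.
  move=> a.
  have unitM : IminusW (ctln_W G eps delta) tau \in unitmx by rewrite unitmxE unitfE; case: (ndg tau).
  have H : IminusW (ctln_W G eps delta) tau *m (const_mx r^-1 : 'cV[R]_#|tau|) = (const_mx 1 : 'cV[R]_#|tau|).
    apply/matrixP => i j; have := congr1 (fun M : 'cV[R]_#|tau| => M i j) M1.
    rewrite !mxE => E; rewrite -[1](mulfV (lt0r_neq0 rpos)) -E mulr_suml.
    by apply: eq_bigr => k _; rewrite !mxE mulr1.
  have := congr1 (mulmx (invmx (IminusW (ctln_W G eps delta) tau))) H.
  rewrite mulmxA mulVmx // mul1mx => <-.
  by rewrite !mxE mulr_gt0 // invr_gt0.
move=> lam /eigenvalueP [u uM unz].
case: (eqVneq lam (Complex r 0)) => [-> //| lamr].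
apply: Qsig; apply/eigenvalueP.
have tsig : forall x, x \in tau -> x \in sigma by move=> x xt; rewrite sig_eq in_setU xt.
set h := enum_rank_in i0t.
pose S y := \sum_(x in tau) u 0 (h x) * Complex (mf G eps delta x y) 0.
have FA : forall c, (u *m map_mx (fun x => Complex x 0) (IminusW (ctln_W G eps delta) tau)) 0 c
    = S (enum_val c).
  move=> c; rewrite mxE (big_enum_rank i0t) /=; apply: eq_bigr => x xt.
  by rewrite mxE IW_E /h enum_rankK_in.
have MC1 : map_mx (fun x => Complex x 0) (IminusW (ctln_W G eps delta) tau) *m
     (const_mx 1 : 'cV[R[i]]_#|tau|) = const_mx (Complex r 0).
  have := congr1 (map_mx (real_complex R)) M1.
  rewrite map_mxM !map_const_mx rmorph1 => E.
  exact: E.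
have su : \sum_(x in tau) u 0 (h x) = 0.
  rewrite -(big_enum_rank i0t (fun b => u 0 b)).
  have := congr1 (fun M : 'rV[R[i]]_#|tau| => (M *m (const_mx 1 : 'cV[R[i]]_#|tau|)) 0 0) uM.
  rewrite /= -mulmxA MC1 -scalemxAl !mxE.
  have e1 : forall c : R[i], \sum_j u 0 j * (const_mx c : 'cV[R[i]]_#|tau|) j 0 = (\sum_j u 0 j) * c.
    by move=> c; rewrite mulr_suml; apply: eq_bigr => j _; rewrite mxE.
  rewrite !e1 mulr1 mulrC => /eqP; rewrite -subr_eq0 -mulrBl mulf_eq0 subr_eq0.
  by rewrite eq_sym (negbTE lamr) /= => /eqP.
pose v : 'rV[R[i]]_#|sigma| := \row_c (if enum_val c \in tau then u 0 (h (enum_val c)) else 0).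
have FB : forall c, (v *m map_mx (fun x => Complex x 0) (IminusW (ctln_W G eps delta) sigma)) 0 c
    = S (enum_val c).
  move=> c; rewrite mxE /v.
  under eq_bigr => b _ do rewrite [X in X * _]mxE [X in _ * X]mxE IW_E.
  rewrite -(big_enum_val (fun x => (if x \in tau then u 0 (h x) else 0) * Complex (mf G eps delta x (enum_val c)) 0)).
  rewrite /S big_mkcond [RHS]big_mkcond; apply: eq_bigr => x _.
  case xt: (x \in tau); first by rewrite tsig.
  by rewrite mul0r; case: (x \in sigma).
exists v.
  apply/rowP => c; rewrite FB [RHS]mxE mxE.
  have : enum_val c \in tau :|: omega by rewrite -sig_eq enum_valP.
  rewrite in_setU => /orP [yt | yo].
    rewrite yt.
    have -> : S (enum_val c) = S (enum_val (h (enum_val c))) by rewrite /h enum_rankK_in.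
    by rewrite -FA uM mxE.
  have ynt : enum_val c \in tau = false by apply: (disjointFl dis yo).
  rewrite ynt mulr0.
  have mfE : forall x, x \in tau -> mf G eps delta x (enum_val c) =
      if G (enum_val c) x then 1 - eps else 1 + delta.
    move=> x xt; rewrite /mf; case: eqP => // E; by rewrite E ynt in xt.
  rewrite /S; case: (sa _ yo) => [allG | noG].
    rewrite (eq_bigr (fun x => u 0 (h x) * Complex (1 - eps) 0)).
      by rewrite -mulr_suml su mul0r.
    by move=> x xt; rewrite mfE // allG.
  rewrite (eq_bigr (fun x => u 0 (h x) * Complex (1 + delta) 0)).
    by rewrite -mulr_suml su mul0r.
  by move=> x xt; rewrite mfE // (negbTE (noG x xt)).
apply: contraNneq unz => v0.
apply/eqP/rowP => b.
have s0 : i0 \in sigma by apply: tsig.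
have := congr1 (fun M : 'rV[R[i]]_#|sigma| => M 0 (enum_rank_in s0 (enum_val b))) v0.
have e : enum_val (enum_rank_in s0 (enum_val b)) = enum_val b.
  by rewrite enum_rankK_in // tsig // enum_valP.
rewrite !mxE e (enum_valP b) /h enum_valK_in => ->.
by rewrite ?mxE.
Qed.
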